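(* Let $n\in\mathbb{N}$ and let $(Q^n,\sigma)$ be the $n$-dimensional hypercube graph with a sign $\sigma$ having precisely one negative edge. Then $(Q^n,\sigma)$ satisfies $CD^\sigma(0,\infty)$ if and only if $n\in\{1,2\}$.
   Context: $Q^n$ is the hypercube graph on $\{0,1\}^n$, two vertices adjacent iff they differ in exactly one coordinate; $d_x$ denotes degree. A sign is $\sigma:E\to\{\pm1\}$, $\sigma_{xy}=\sigma(\{x,y\})$. Signed Laplacian $\Delta^{\sigma}f(x)=\frac{1}{d_x}\sum_{y\sim x}(\sigma_{xy}f(y)-f(x))$; $\Delta$ is the case $\sigma\equiv+1$. $\Gamma^{\sigma}(f,g)=\frac12\{\Delta(fg)-g\Delta^{\sigma}f-f\Delta^{\sigma}g\}$, $\Gamma_2^{\sigma}(f,g)=\frac12\{\Delta\Gamma^{\sigma}(f,g)-\Gamma^{\sigma}(g,\Delta^{\sigma}f)-\Gamma^{\sigma}(f,\Delta^{\sigma}g)\}$. $(G,\sigma)$ satisfies $CD^\sigma(K,\infty)$ if $\Gamma_2^\sigma(f,f)(x)\ge K\Gamma^\sigma(f,f)(x)$ for all $f:V\to\mathbb{R}$ and all vertices $x$. *)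

(* Defs.v *)
From mathcomp Require Import all_boot all_order all_algebra.
From mathcomp Require Import reals.
Set Implicit Arguments. Unset Strict Implicit. Unset Printing Implicit Defensive.
Import Order.TTheory GRing.Theory Num.Theory.
Local Open Scope ring_scope.

Section Hypercube.
Variable R : realType.
Variable n : nat.

Definition hcV := {ffun 'I_n -> bool}.

Definition hc_adj (x y : hcV) : bool := #|[set i | x i != y i]| == 1%N.

Definition hc_edges : {set {set hcV}} :=
  [set e | [exists x, exists y, hc_adj x y && (e == [set x; y])]].

Definition hc_deg (x : hcV) : nat := #|[set y | hc_adj x y]|.

(* a sign is a function on edges; sigma_xy = sigma [set x; y] *)
Definition is_sign (sigma : {set hcV} -> R) : Prop :=
  forall e, e \in hc_edges -> sigma e = 1 \/ sigma e = -1.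

Definition slap (sigma : {set hcV} -> R) (f : hcV -> R) (x : hcV) : R :=
  (hc_deg x)%:R^-1 * \sum_(y | hc_adj x y) (sigma [set x; y] * f y - f x).

Definition lap (f : hcV -> R) (x : hcV) : R := slap (fun _ => 1) f x.

Definition sGamma (sigma : {set hcV} -> R) (f g : hcV -> R) (x : hcV) : R :=
  2^-1 * (lap (fun z => f z * g z) x - g x * slap sigma f x - f x * slap sigma g x).

Definition sGamma2 (sigma : {set hcV} -> R) (f g : hcV -> R) (x : hcV) : R :=
  2^-1 * (lap (sGamma sigma f g) x - sGamma sigma g (slap sigma f) x
          - sGamma sigma f (slap sigma g) x).

Definition CDsigma (sigma : {set hcV} -> R) (K : R) : Prop :=
  forall (f : hcV -> R) (x : hcV), sGamma2 sigma f f x >= K * sGamma sigma f f x.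

End Hypercube.

(* Main.v *)
Require Import Defs.
From mathcomp Require Import all_boot all_order all_algebra.
From mathcomp Require Import reals.
From mathcomp Require Import ring lra.
Import Order.TTheory GRing.Theory Num.Theory.
Local Open Scope ring_scope.
Set Implicit Arguments. Unset Strict Implicit. Unset Printing Implicit Defensive.

Section S.
Variable n : nat.

Definition flip (y : hcV n) (i : 'I_n) : hcV n :=
  [ffun j => if j == i then ~~ y j else y j].

Lemma flipK (y : hcV n) i : flip (flip y i) i = y.
Proof. by apply/ffunP => j; rewrite !ffunE; case: eqP => // ->; rewrite negbK. Qed.

Lemma flipC (y : hcV n) i j : flip (flip y i) j = flip (flip y j) i.
Proof.
apply/ffunP => k; rewrite !ffunE.
by case: (k == i); case: (k == j).
Qed.

Lemma diff_flip (y : hcV n) (i : 'I_n) : [set j | y j != flip y i j] = [set i].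
Proof.
apply/setP => j; rewrite !inE ffunE.
by case: (j == i); case: (y j).
Qed.

Lemma flip_inj (y : hcV n) : injective (flip y).
Proof.
move=> i j /ffunP /(_ i); rewrite !ffunE eqxx.
by case: (i =P j) => // _; case: (y i).
Qed.

Lemma flip_neq (y : hcV n) i : flip y i != y.
Proof.
apply/eqP => /ffunP /(_ i); rewrite ffunE eqxx; by case: (y i).
Qed.

Lemma adj_set (y : hcV n) : [set z | hc_adj y z] = flip y @: [set: 'I_n].
Proof.
apply/setP => z; rewrite inE /hc_adj; apply/cards1P/imsetP.
- case=> i Hi; exists i => //; apply/ffunP => j; rewrite ffunE.
  move/setP: Hi => /(_ j); rewrite !inE.
  case: (j =P i) => [->|_] /=; first by case: (y i); case: (z i).
  by move/negbFE/eqP.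
- by case=> i _ ->; exists i; rewrite diff_flip.
Qed.

Lemma sum_adj (R : realType) y (F : hcV n -> R) :
  \sum_(z | hc_adj y z) F z = \sum_(i < n) F (flip y i).
Proof.
rewrite (eq_bigl (fun z => z \in [set z | hc_adj y z])); last by move=> z; rewrite inE.
rewrite adj_set big_imset /=; last by move=> i j _ _; apply: flip_inj.
by apply: eq_bigl => i; rewrite inE.
Qed.

Lemma deg_n (y : hcV n) : hc_deg y = n.
Proof.
by rewrite /hc_deg adj_set card_imset ?cardsT ?card_ord //; apply: flip_inj.
Qed.

Lemma adj_flip (y : hcV n) i : hc_adj y (flip y i).
Proof. by rewrite /hc_adj diff_flip cards1. Qed.

Lemma edge_flip (y : hcV n) i : [set y; flip y i] \in hc_edges n.
Proof.
rewrite inE; apply/existsP; exists y; apply/existsP; exists (flip y i).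
by rewrite adj_flip eqxx.
Qed.


Lemma sign_facts (R : realType) (sigma : {set hcV n} -> R) :
  is_sign sigma ->
  #|[set e in hc_edges n | sigma e == -1]| = 1%N ->
  exists a i0, sigma [set a; flip a i0] = -1 /\
    forall y i, [set y; flip y i] != [set a; flip a i0] -> sigma [set y; flip y i] = 1.
Proof.
move=> Hs /eqP /cards1P [e0 He0].
have : e0 \in [set e in hc_edges n | sigma e == -1] by rewrite He0 set11.
rewrite inE => /andP [] /[dup] Hedge.
rewrite inE => /existsP [x /existsP [y /andP [Hxy /eqP E]]] /eqP Hneg.
have : y \in [set z | hc_adj x z] by rewrite inE.
rewrite adj_set => /imsetP [i0 _ Ey].
exists x, i0; rewrite -Ey -E; split => // z i Hne.
case: (Hs _ (edge_flip z i)) => // Hm.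
have : [set z; flip z i] \in [set e in hc_edges n | sigma e == -1].
  by rewrite inE edge_flip Hm eqxx.
by rewrite He0 inE (negbTE Hne).
Qed.

Lemma sum_if (R : realType) (k : 'I_n) (u v : R) :
  \sum_(i < n) (if i == k then u else v) = u + (n.-1)%:R * v.
Proof.
rewrite (bigD1 k) //= eqxx; congr (_ + _).
rewrite (eq_bigr (fun _ => v)); last by move=> i /negbTE ->.
rewrite sumr_const cardC1 card_ord mulr_natl //.
Qed.


Section Neg.
Variable R : realType.
Variable sigma : {set hcV n} -> R.
Variables (a : hcV n) (i0 : 'I_n).
Hypothesis Hneg : sigma [set a; flip a i0] = -1.
Hypothesis Hpos : forall y i, [set y; flip y i] != [set a; flip a i0] -> sigma [set y; flip y i] = 1.

Definition fd (z : hcV n) : R := (#|[set j | a j != z j]|)%:R.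

Lemma fd_a : fd a = 0.
Proof.
rewrite /fd (_ : [set j | _] = set0) ?cards0 //.
by apply/setP => j; rewrite !inE eqxx.
Qed.

Lemma fd_1 i : fd (flip a i) = 1.
Proof. by rewrite /fd diff_flip cards1. Qed.

Lemma fd_2 j i : fd (flip (flip a j) i) = if i == j then 0 else 2.
Proof.
have [->|ij] := eqVneq i j; first by rewrite flipK fd_a.
rewrite /fd (_ : [set k | _] = [set j; i]) ?cards2 ?(negbTE (ij : i != j)) 1?eq_sym ?ij //.
apply/setP => k; rewrite !inE !ffunE.
have [->|ki] := eqVneq k i.
  by rewrite (negbTE ij) orbT; case: (a i).
by rewrite orbF; case: (k == j); case: (a k).
Qed.

Lemma sig_a i : sigma [set a; flip a i] = if i == i0 then -1 else 1.
Proof.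
have [->|ne] := eqVneq i i0; first by [].
apply: Hpos; apply/eqP => E.
have : flip a i \in [set a; flip a i0] by rewrite -E !inE eqxx orbT.
rewrite !inE (negbTE (flip_neq a i)) /= => /eqP /flip_inj Eq.
by rewrite Eq eqxx in ne.
Qed.

Lemma sig_b j i : sigma [set flip a j; flip (flip a j) i] =
   if i == j then (if j == i0 then -1 else 1) else 1.
Proof.
have [->|ne] := eqVneq i j; first by rewrite flipK setUC sig_a.
apply: Hpos; apply/eqP => E.
have : a \in [set flip a j; flip (flip a j) i] by rewrite E !inE eqxx.
rewrite !inE eq_sym (negbTE (flip_neq a j)) /= => /eqP Ea.
have : flip a j = flip a i by rewrite {2}Ea flipK.
by move/flip_inj => Eji; rewrite Eji eqxx in ne.
Qed.

Hypothesis Hn : (2 < n)%N.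
Local Notation N := (n%:R : R).

Lemma N_neq0 : N != 0.
Proof. by rewrite pnatr_eq0 -lt0n (ltn_trans (isT : 0 < 2)%N Hn). Qed.

Lemma natr_pred : ((n.-1)%:R : R) = N - 1.
Proof. by rewrite -subn1 natrB // (ltn_trans (isT : 0 < 2)%N Hn). Qed.

Lemma sum_if' (k : 'I_n) (u v : R) :
  \sum_(i < n) (if i == k then u else v) = u + (N - 1) * v.
Proof. by rewrite sum_if natr_pred. Qed.

Lemma slap_a : slap sigma fd a = (N - 2) / N.
Proof.
rewrite /slap deg_n sum_adj (eq_bigr (fun i => if i == i0 then -1 else 1)).
  rewrite sum_if'; field; rewrite ?N_neq0 ?andbT //.
by move=> i _; rewrite sig_a fd_1 fd_a; case: (i == i0); lra.
Qed.

Lemma slap_b j : slap sigma fd (flip a j) = (N - 2) / N.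
Proof.
rewrite /slap deg_n sum_adj (eq_bigr (fun i => if i == j then -1 else 1)).
  rewrite sum_if'; field; rewrite ?N_neq0 ?andbT //.
by move=> i _; rewrite sig_b fd_2 fd_1; case: (i == j); case: (j == i0); lra.
Qed.

Lemma gam_a : sGamma sigma fd fd a = 2^-1.
Proof.
rewrite /sGamma slap_a fd_a /lap /slap deg_n sum_adj (eq_bigr (fun i => 1)).
  rewrite sumr_const card_ord; field; rewrite ?N_neq0 ?andbT //.
by move=> i _; rewrite fd_1 fd_a; lra.
Qed.

Lemma gam_b j : sGamma sigma fd fd (flip a j) = 2^-1.
Proof.
rewrite /sGamma slap_b fd_1 /lap /slap deg_n sum_adj (eq_bigr (fun i => if i == j then -1 else 3)).
  rewrite sum_if'; field; rewrite ?N_neq0 ?andbT //.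
by move=> i _; rewrite fd_2 fd_1; case: (i == j); lra.
Qed.

Lemma gam2_a : sGamma2 sigma fd fd a < 0.
Proof.
rewrite /sGamma2.
have -> : lap (sGamma sigma fd fd) a = 0.
  rewrite /lap /slap deg_n sum_adj (eq_bigr (fun i => 0)); first by rewrite big1 // mulr0.
  by move=> i _; rewrite gam_b gam_a; lra.
have -> : sGamma sigma fd (slap sigma fd) a = 2^-1 * ((N - 2) / N - ((N - 2) / N) ^+ 2).
  rewrite /sGamma slap_a fd_a mul0r subr0 expr2; congr (_ * (_ - _)).
  rewrite /lap; set g := slap sigma fd; rewrite /slap deg_n sum_adj (eq_bigr (fun i => (N - 2) / N)).
    rewrite sumr_const card_ord -mulr_natl; field; rewrite ?N_neq0 ?andbT //.
  by move=> i _; rewrite /g fd_1 fd_a slap_b slap_a; lra.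
have h3 : (3 : R) <= N by rewrite (ler_nat R 3 n).
set c := (N - 2) / N.
have c0 : 0 < c by rewrite divr_gt0 //; lra.
have c1 : c < 1 by rewrite /c ltr_pdivrMr; lra.
nra.
Qed.

End Neg.

End S.


Lemma slapE (R : realType) n (sigma : {set hcV n} -> R) f y :
  slap sigma f y = n%:R^-1 * \sum_(i < n) (sigma [set y; flip y i] * f (flip y i) - f y).
Proof. by rewrite /slap deg_n sum_adj. Qed.

Lemma sum2 (R : realType) (F : 'I_2 -> R) :
  \sum_(i < 2) F i = F (@Ordinal 2 0 isT) + F (@Ordinal 2 1 isT).
Proof.
rewrite big_ord_recl big_ord1; congr (F _ + F _); exact/val_inj.
Qed.

Lemma pos2 (R : realType) (sigma : {set hcV 2} -> R) f x :
  is_sign sigma -> 0 * sGamma sigma f f x <= sGamma2 sigma f f x.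
Proof.
move=> Hs; rewrite mul0r /sGamma2 /sGamma /lap.
rewrite !slapE /=.
rewrite !sum2 /=.
rewrite !slapE /= !sum2 /=.
set i0 := @Ordinal 2 0 isT. set i1 := @Ordinal 2 1 isT.
rewrite !flipK (flipC x i1 i0) (setUC [set flip x i0] [set x]) (setUC [set flip x i1] [set x]).
have h1 := Hs _ (edge_flip x i0).
have h2 := Hs _ (edge_flip x i1).
have h3 := Hs _ (edge_flip (flip x i0) i1).
have h4 := Hs _ (edge_flip (flip x i1) i0).
rewrite (flipC x i1 i0) in h4.
move: h1 h2 h3 h4.
set s1 := sigma [set x; flip x i0].
set s2 := sigma [set x; flip x i1].
set s3 := sigma [set flip x i0; flip (flip x i0) i1].
set s4 := sigma [set flip x i1; flip (flip x i0) i1].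
set a := f x. set b := f (flip x i0). set c := f (flip x i1). set d := f (flip (flip x i0) i1).
clearbody s1 s2 s3 s4 a b c d.
case=> ->; case=> ->; case=> ->; case=> ->.
- have := sqr_ge0 ((5) * a + (-3) * b + (-3) * c + (1) * d); have := sqr_ge0 ((3) * b + (-2) * c + (-1) * d); have := sqr_ge0 ((1) * c + (-1) * d); lra.
- have := sqr_ge0 ((5) * a + (-3) * b + (-3) * c); have := sqr_ge0 ((6) * b + (-4) * c + (-5) * d); have := sqr_ge0 ((2) * c + (1) * d); lra.
- have := sqr_ge0 ((5) * a + (-3) * b + (-3) * c); have := sqr_ge0 ((6) * b + (-4) * c + (5) * d); have := sqr_ge0 ((2) * c + (-1) * d); lra.
- have := sqr_ge0 ((5) * a + (-3) * b + (-3) * c + (-1) * d); have := sqr_ge0 ((3) * b + (-2) * c + (1) * d); have := sqr_ge0 ((1) * c + (1) * d); lra.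
- have := sqr_ge0 ((5) * a + (-3) * b + (3) * c); have := sqr_ge0 ((6) * b + (4) * c + (-5) * d); have := sqr_ge0 ((2) * c + (-1) * d); lra.
- have := sqr_ge0 ((5) * a + (-3) * b + (3) * c + (1) * d); have := sqr_ge0 ((3) * b + (2) * c + (-1) * d); have := sqr_ge0 ((1) * c + (1) * d); lra.
- have := sqr_ge0 ((5) * a + (-3) * b + (3) * c + (-1) * d); have := sqr_ge0 ((3) * b + (2) * c + (1) * d); have := sqr_ge0 ((1) * c + (-1) * d); lra.
- have := sqr_ge0 ((5) * a + (-3) * b + (3) * c); have := sqr_ge0 ((6) * b + (4) * c + (5) * d); have := sqr_ge0 ((2) * c + (1) * d); lra.
- have := sqr_ge0 ((5) * a + (3) * b + (-3) * c); have := sqr_ge0 ((6) * b + (4) * c + (-5) * d); have := sqr_ge0 ((2) * c + (-1) * d); lra.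
- have := sqr_ge0 ((5) * a + (3) * b + (-3) * c + (-1) * d); have := sqr_ge0 ((3) * b + (2) * c + (-1) * d); have := sqr_ge0 ((1) * c + (1) * d); lra.
- have := sqr_ge0 ((5) * a + (3) * b + (-3) * c + (1) * d); have := sqr_ge0 ((3) * b + (2) * c + (1) * d); have := sqr_ge0 ((1) * c + (-1) * d); lra.
- have := sqr_ge0 ((5) * a + (3) * b + (-3) * c); have := sqr_ge0 ((6) * b + (4) * c + (5) * d); have := sqr_ge0 ((2) * c + (1) * d); lra.
- have := sqr_ge0 ((5) * a + (3) * b + (3) * c + (-1) * d); have := sqr_ge0 ((3) * b + (-2) * c + (-1) * d); have := sqr_ge0 ((1) * c + (-1) * d); lra.
- have := sqr_ge0 ((5) * a + (3) * b + (3) * c); have := sqr_ge0 ((6) * b + (-4) * c + (-5) * d); have := sqr_ge0 ((2) * c + (1) * d); lra.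
- have := sqr_ge0 ((5) * a + (3) * b + (3) * c); have := sqr_ge0 ((6) * b + (-4) * c + (5) * d); have := sqr_ge0 ((2) * c + (-1) * d); lra.
- have := sqr_ge0 ((5) * a + (3) * b + (3) * c + (1) * d); have := sqr_ge0 ((3) * b + (-2) * c + (1) * d); have := sqr_ge0 ((1) * c + (1) * d); lra.
Qed.

Lemma pos1 (R : realType) (sigma : {set hcV 1} -> R) f x :
  is_sign sigma -> 0 * sGamma sigma f f x <= sGamma2 sigma f f x.
Proof.
move=> Hs; rewrite mul0r /sGamma2 /sGamma /lap.
rewrite !slapE /= !big_ord1 /= !slapE /= !big_ord1 /=.
rewrite !flipK (setUC [set flip x ord0] [set x]).
have h1 := Hs _ (edge_flip x ord0).
move: h1.
set s1 := sigma [set x; flip x ord0].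
set a := f x. set b := f (flip x ord0).
clearbody s1 a b.
case=> ->.
- have := sqr_ge0 (a - b); lra.
- have := sqr_ge0 (a + b); lra.
Qed.

Theorem propositionA2 (R : realType) (n : nat) (sigma : {set hcV n} -> R) :
  is_sign sigma ->
  #|[set e in hc_edges n | sigma e == -1]| = 1%N ->
  (CDsigma sigma 0 <-> (n = 1%N \/ n = 2%N)).
Proof.
move=> Hs Hc; split.
- move=> Hcd.
  have [a [i0 [Hneg Hpos]]] := sign_facts Hs Hc.
  have n0 : (0 < n)%N by apply: leq_ltn_trans (ltn_ord i0).
  case: (ltnP 2 n) => [Hn|Hle].
  + have := gam2_a Hneg Hpos Hn.
    by have := Hcd (@fd _ R a) a; rewrite mul0r => /le_lt_trans H /H; rewrite ltxx.
  + by move: n0 Hle; clear; case: n => [|[|[|k]]] // _ _; [left|right].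
- case=> En; subst n => f x.
  + exact: pos1.
  + exact: pos2.
Qed.
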